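(* Let $n\ge2$, $c\in(0,\infty)$, and let $\Sigma_n\in\mathbb{R}^{n\times n}$ have entries $(\Sigma_n)_{ij}=\frac{\pi}{i+j}+\frac{4c\pi^2}{(i+1)(j+1)}$ if $c\in(0,1]$ and $(\Sigma_n)_{ij}=\frac{\pi}{c(i+j)}+\frac{4\pi^2}{(i+1)(j+1)}$ if $c\in(1,\infty)$. Then for $c\in(0,1]$ $$\det(\Sigma_n)=\frac{\pi(1+2c\pi)}{2}\prod_{i=2}^n\frac{\pi\prod_{k=1}^{i-1}(i-k)^2}{2i\prod_{k=1}^{i-1}(i+k)^2},$$ and for $c\in(1,\infty)$ $$\det(\Sigma_n)=\frac{\pi(1+2c\pi)}{2c^n}\prod_{i=2}^n\frac{\pi\prod_{k=1}^{i-1}(i-k)^2}{2i\prod_{k=1}^{i-1}(i+k)^2}.$$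
   Context: $\Sigma_n$ is the asymptotic covariance matrix, in the critical regime $t\delta_t^d\to c$, of the vector $(\tilde L_t^{(0)},\dots,\tilde L_t^{(n-1)})$ of normalized length power functionals in dimension $d=2$ for a window of volume $1$. *)

(* Defs.v *)
From HB Require Import structures.
From mathcomp Require Import all_boot all_order all_algebra.
From mathcomp Require Import reals trigo.
Set Implicit Arguments. Unset Strict Implicit. Unset Printing Implicit Defensive.
Import Order.TTheory GRing.Theory Num.Theory.
Local Open Scope ring_scope.

(* Sigma_n, with the paper's indices i, j in {1,...,n}; the ordinal
   i : 'I_n represents the paper's index i.+1. *)
Definition Sigma (R : realType) (n : nat) (c : R) : 'M[R]_n :=
  \matrix_(i < n, j < n)
    if c <= 1 then
      pi / (i.+1 + j.+1)%:R + 4 * c * pi ^+ 2 / ((i.+2)%:R * (j.+2)%:R)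
    else
      pi / (c * (i.+1 + j.+1)%:R) + 4 * pi ^+ 2 / ((i.+2)%:R * (j.+2)%:R).

Definition det_factor (R : realType) (n : nat) : R :=
  \prod_(2 <= i < n.+1)
    ((pi * \prod_(1 <= k < i) ((i - k)%:R) ^+ 2) /
     (2 * i%:R * \prod_(1 <= k < i) ((i + k)%:R) ^+ 2)).

(* Main.v *)
Require Import Defs.
From HB Require Import structures.
From mathcomp Require Import all_boot all_order all_algebra.
From mathcomp Require Import reals trigo.
From mathcomp Require Import ring lra.
Import Order.TTheory GRing.Theory Num.Theory.
Local Open Scope ring_scope.
Set Implicit Arguments. Unset Strict Implicit. Unset Printing Implicit Defensive.


Lemma entry_id (R : realFieldType) (i j n : nat) : (i <= n)%N -> (j <= n)%N ->
  (i.+1 + j.+1)%:R^-1 -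
  (i.+1 + n.+1)%:R^-1 * ((n.+1 + n.+1)%:R / (n.+1 + j.+1)%:R) =
  (n - i)%:R / (i.+1 + n.+1)%:R / (i.+1 + j.+1)%:R *
  ((n - j)%:R / (j.+1 + n.+1)%:R) :> R.
Proof.
move=> hi hj; rewrite !natrB // !natrD !mulrS.
have ha : 0 <= i%:R :> R by apply: ler0n.
have hb : 0 <= j%:R :> R by apply: ler0n.
have hc : 0 <= n%:R :> R by apply: ler0n.
field.
by apply/and3P; split; apply/lt0r_neq0; lra.
Qed.

Section S.
Variable R : realFieldType.

Definition hm n : 'M[R]_n := \matrix_(i < n, j < n) ((i.+1 + j.+1)%:R)^-1.

Lemma rank1_mul n (A : 'M[R]_n.+1) (r : 'rV[R]_n.+1) :
  A *m (1%:M - delta_mx ord_max 0 *m r) =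
  \matrix_(i, j) (A i j - A i ord_max * r 0 j).
Proof.
rewrite mulmxBr mulmx1 mulmxA -colE; apply/matrixP => i j.
by rewrite !mxE big_ord1 !mxE.
Qed.

Lemma det_rank1 n (r : 'rV[R]_n.+1) : r 0 ord_max = 0 ->
  \det (1%:M - delta_mx ord_max 0 *m r) = 1.
Proof.
move=> r0; rewrite det_trig.
  apply: big1 => i _; rewrite !mxE big_ord1 !mxE eqxx /=.
  by case: eqP => [->|]; rewrite ?r0 ?mulr0 ?mul0r subr0.
apply/is_trig_mxP => i j lt_ij; rewrite !mxE big_ord1 !mxE.
have -> : (i == ord_max) = false.
  apply/negbTE/eqP => eiN; move: lt_ij; rewrite eiN /= ltnNge.
  by rewrite -ltnS ltn_ord.
have -> : (i == j) = false by apply/negbTE; rewrite neq_ltn lt_ij.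
by rewrite mul0r subr0.
Qed.


Lemma hm_step n :
  \det (hm n.+1) = \det (hm n) *
    (((n.+1 + n.+1)%:R)^-1 * \prod_(i < n) ((n - i)%:R / (i.+1 + n.+1)%:R) ^+ 2).
Proof.
pose r : 'rV[R]_n.+1 := \row_j (if j == ord_max then 0
   else (n.+1 + n.+1)%:R / (n.+1 + j.+1)%:R).
have r0 : r 0 ord_max = 0 by rewrite mxE eqxx.
transitivity (\det (hm n.+1 *m (1%:M - delta_mx ord_max 0 *m r))).
  by rewrite det_mulmx det_rank1 // mulr1.
rewrite rank1_mul.
rewrite (expand_det_row _ ord_max) (bigD1 ord_max) //= big1 ?addr0; last first.
  move=> j /negbTE jN; rewrite !mxE jN /=.
  by rewrite mulKf ?pnatr_eq0 // subrr mul0r.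
rewrite /hm !mxE eqxx mulr0 subr0 /cofactor.
have eN : (ord_max : 'I_n.+1) = n :> nat by [].
pose p : 'rV[R]_n := \row_i ((n - i)%:R / (i.+1 + n.+1)%:R).
have -> : row' ord_max (col' ord_max
    (\matrix_(i, j) ((\matrix_(i0 < n.+1, j0 < n.+1) ((i0.+1 + j0.+1)%:R)^-1 : 'M[R]_n.+1) i j -
       (\matrix_(i0 < n.+1, j0 < n.+1) ((i0.+1 + j0.+1)%:R)^-1 : 'M[R]_n.+1) i ord_max * r 0 j)))
   = diag_mx p *m hm n *m diag_mx p.
  apply/matrixP => i j; rewrite mul_mx_diag mul_diag_mx !mxE !lift_max.
  have -> : (lift ord_max j == ord_max) = false by apply/negbTE; rewrite eq_sym neq_lift.
  by rewrite eN; exact: entry_id (ltnW (ltn_ord i)) (ltnW (ltn_ord j)).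
have sgn : (-1)^+(n+n) = 1 :> R by rewrite addnn -mul2n exprM sqrrN expr1n expr1n.
rewrite eN sgn mul1r !det_mulmx det_diag.
rewrite -/(hm n) prodrXl.
under eq_bigr do rewrite mxE.
rewrite expr2; ring.
Qed.

Lemma sig_det m (a b : R) :
  \det (\matrix_(i < m.+1, j < m.+1)
          (a * hm m.+1 i j + b * (hm m.+1 i 0 * hm m.+1 0 j))) =
  \det (hm m.+1) * ((a + b / 2) * a ^+ m).
Proof.
pose T : 'M[R]_m.+1 := a%:M + b *: (delta_mx 0 0 *m row 0 (hm m.+1)).
have -> : \matrix_(i < m.+1, j < m.+1)
          (a * hm m.+1 i j + b * (hm m.+1 i 0 * hm m.+1 0 j)) = hm m.+1 *m T.
  apply/matrixP => i j.
  rewrite mulmxDr mul_mx_scalar -scalemxAr mulmxA -colE !mxE big_ord1 !mxE.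
  by rewrite mulrC.
rewrite det_mulmx; congr (_ * _); rewrite -det_tr det_trig; last first.
  apply/is_trig_mxP => i j lt_ij; rewrite !mxE big_ord1 !mxE.
  have -> : (j == i) = false by apply/negbTE; rewrite neq_ltn lt_ij orbT.
  have -> : (j == 0) = false by apply/negbTE; rewrite neq_ltn (leq_ltn_trans _ lt_ij).
  by rewrite mulr0n add0r /= mul0r mulr0.
rewrite big_ord_recl; congr (_ * _).
  rewrite !mxE big_ord1 !mxE /hm eqxx mulr1n.
  by rewrite !eqxx /= mul1r.
rewrite -[in RHS](card_ord m) -prodr_const; apply: eq_bigr => i _.
rewrite !mxE big_ord1 !mxE eqxx /=.
by rewrite mul0r mulr0 addr0.
Qed.
End S.

Lemma hm_factor (R : realType) m :
  2 * pi ^+ m * \det (hm R m.+1) = det_factor R m.+1.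
Proof.
elim: m => [|m IH].
  rewrite /det_factor big_geq // expr0 mulr1 det_mx11 /hm mxE.
  by rewrite divff // pnatr_eq0.
have E : det_factor R m.+2 = det_factor R m.+1 *
    ((pi * \prod_(1 <= k < m.+2) ((m.+2 - k)%:R) ^+ 2) /
     (2 * m.+2%:R * \prod_(1 <= k < m.+2) ((m.+2 + k)%:R) ^+ 2)).
  by rewrite /det_factor big_nat_recr.
rewrite E -IH hm_step !big_add1 /= !big_mkord.
rewrite !prodrXl prodf_div.
have eQ : \prod_(i < m.+1) (i.+1 + m.+2)%:R = \prod_(i < m.+1) (m.+2 + i.+1)%:R :> R.
  by apply: eq_bigr => i _; rewrite addnC.
have eP : \prod_(i < m.+1) (m.+2 - i.+1)%:R = \prod_(i < m.+1) (m.+1 - i)%:R :> R.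
  by apply: eq_bigr => i _; rewrite subSS.
have hQ : 0 < \prod_(i < m.+1) (m.+2 + i.+1)%:R :> R.
  by apply: prodr_gt0 => i _; rewrite ltr0n addnS.
have e2 : (m.+2 + m.+2)%:R = 2 * (m.+2)%:R :> R by rewrite natrD; ring.
rewrite eQ eP e2.
move: hQ; set Q := \prod_(i < m.+1) _; set P := \prod_(i < m.+1) _ => hQ.
have hm2 : 0 < (m.+2)%:R :> R by rewrite ltr0n.
rewrite exprS; field.
have hm0 : 0 <= m%:R :> R by apply: ler0n.
by rewrite (lt0r_neq0 hQ) /=; apply/lt0r_neq0; lra.
Qed.

Theorem corollary7p12 (R : realType) (n : nat) (c : R) :
  (2 <= n)%N -> 0 < c ->
  (c <= 1 -> \det (Sigma n c) = pi * (1 + 2 * c * pi) / 2 * det_factor R n) /\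
  (1 < c -> \det (Sigma n c) = pi * (1 + 2 * c * pi) / (2 * c ^+ n) * det_factor R n).
Proof.
case: n => [|[|m]] // _ hc.
have pi0 : 0 < pi :> R by apply: pi_gt0.
split => hc1.
  have -> : Sigma m.+2 c = \matrix_(i < m.+2, j < m.+2)
       (pi * hm R m.+2 i j + (4 * c * pi ^+ 2) * (hm R m.+2 i 0 * hm R m.+2 0 j)).
    apply/matrixP => i j; rewrite /Sigma /hm !mxE hc1.
    by rewrite invfM; congr (_ + _ * (_ * _)); rewrite ?addn1.
  rewrite sig_det -hm_factor.
  by field.

have hc1' : (c <= 1) = false by rewrite leNgt hc1.
have -> : Sigma m.+2 c = \matrix_(i < m.+2, j < m.+2)
     (pi / c * hm R m.+2 i j + (4 * pi ^+ 2) * (hm R m.+2 i 0 * hm R m.+2 0 j)).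
  apply/matrixP => i j; rewrite /Sigma /hm !mxE hc1'.
  rewrite !invfM mulrA; congr (_ + _ * (_ * _)); by rewrite ?addn1.
rewrite sig_det -hm_factor expr_div_n.
have c0 : c != 0 by apply: lt0r_neq0.
have cm0 : c ^+ m.+1 != 0 by apply: expf_neq0.
rewrite [c ^+ m.+2]exprS.
move: cm0; set C := c ^+ m.+1; set P := pi ^+ m.+1 => cm0.
by field; rewrite c0 cm0.
Qed.
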